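(* Let $n\ge 2$ and let $a_1,\dots,a_n$ be positive integers. For $k\ge 1$ put $p_k=K(a_1,\dots,a_k)$, $q_k=K(a_2,\dots,a_k)$ and $r_k=K(a_3,\dots,a_k)$, so that $[a_1,\dots,a_n]=p_n/q_n$ and $[a_2,\dots,a_n]=q_n/r_n$. Then \[ [a_n,\dots,a_2,a_1,a_2,\dots,a_n]=\frac{p_n^2-r_n^2}{p_{n-1}p_n-r_{n-1}r_n}. \]
   Context: $[b_1,\dots,b_k]=b_1+\cfrac{1}{b_2+\cfrac{1}{\ddots+\cfrac{1}{b_k}}}$ denotes a continued fraction. For positive integers $a_i,\dots,a_j$, $K(a_i,\dots,a_j)$ denotes the continuant, i.e. the numerator of $[a_i,\dots,a_j]$ written in lowest terms; by convention $K(a_i,\dots,a_j)=1$ if $j=i-1$ (empty sequence) and $K(a_i,\dots,a_j)=0$ if $j=i-2$. *)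

(* Defs.v *)
From mathcomp Require Import all_boot all_order all_algebra.
Set Implicit Arguments. Unset Strict Implicit. Unset Printing Implicit Defensive.
Import GRing.Theory Num.Theory.
Local Open Scope ring_scope.

Fixpoint cont (s : seq nat) : nat :=
  match s with
  | [::] => 1%N
  | [:: x] => x
  | x :: ((_ :: t) as s') => (x * cont s' + cont t)%N
  end.

(* K(a_i, ..., a_j) for a sequence a indexed by nat (a_k = a k);
   K = 1 for the empty sequence j = i-1, K = 0 when j = i-2. *)
Definition K (a : nat -> nat) (i j : nat) : nat :=
  if (j.+2 == i)%N then 0%N
  else cont [seq a k | k <- iota i (j.+1 - i)].

Fixpoint cf (s : seq nat) : rat :=
  match s with
  | [::] => 0
  | [:: x] => x%:R
  | x :: s' => x%:R + (cf s')^-1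
  end.

(* Main.v *)
Require Import Defs.
From mathcomp Require Import all_boot all_order all_algebra.
From mathcomp Require Import zify ring lra.
Import GRing.Theory Num.Theory.
Local Open Scope ring_scope.

Definition quad := (nat * nat * nat * nat)%type.
Definition mm (u v : quad) : quad :=
  let: (a, b, c, d) := u in let: (e, f, g, h) := v in
  (a * e + b * g, a * f + b * h, c * e + d * g, c * f + d * h)%N.
Definition tr (u : quad) : quad := let: (a, b, c, d) := u in (a, c, b, d).
Fixpoint G (s : seq nat) : quad :=
  match s with [::] => (1, 0, 0, 1)%N | x :: t => mm (x, 1, 1, 0)%N (G t) end.

Lemma G_cons x t : G (x :: t) = mm (x, 1, 1, 0)%N (G t).
Proof. by []. Qed.

Lemma mmA u v w : mm u (mm v w) = mm (mm u v) w.
Proof.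
case: u => [[[a b] c] d]; case: v => [[[e f] g] h]; case: w => [[[i j] k] l] /=.
congr (_, _, _, _); ring.
Qed.

Lemma mm1 v : mm (1, 0, 0, 1)%N v = v.
Proof. case: v => [[[e f] g] h] /=; congr (_, _, _, _); ring. Qed.

Lemma trM u v : tr (mm u v) = mm (tr v) (tr u).
Proof.
case: u => [[[a b] c] d]; case: v => [[[e f] g] h] /=.
congr (_, _, _, _); ring.
Qed.

Lemma G_cat u v : G (u ++ v) = mm (G u) (G v).
Proof. elim: u => [|x u IH]; first by rewrite cat0s mm1. by rewrite cat_cons !G_cons IH mmA. Qed.

Lemma G_rev s : G (rev s) = tr (G s).
Proof.
elim: s => [|x s IH] //.
rewrite G_cons rev_cons -cats1 G_cat IH trM /=.
congr (mm _ _); rewrite /=; congr (_, _, _, _); ring.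
Qed.

Lemma G_fst s : (G s).1.1.1 = cont s /\ (G s).1.2 = (if s is _ :: t then cont t else 0%N).
Proof.
elim: s => [|x t [IH1 IH2]] //=.
move: IH1 IH2; case: (G t) => [[[e f] g] h] /= -> ->.
case: t => [|y t] /=; split; ring.
Qed.

Lemma cont_pos s : all (fun x => 0 < x)%N s -> (0 < cont s)%N.
Proof.
elim: s => [|x s IH] //= /andP [hx hs].
case: s IH hs => [|y t] IH hs //=.
have := IH hs. simpl. nia.
Qed.

Lemma cf_cont s : s != [::] -> all (fun x => 0 < x)%N s ->
  cf s = (cont s)%:R / (cont (behead s))%:R.
Proof.
elim: s => [|x s IH] // _ /andP [hx hs].
have h1 := cont_pos s hs.
case: s IH hs h1 => [|y t] IH hs h1; first by rewrite /= divr1.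
have -> : cf [:: x, y & t] = x%:R + (cf (y :: t))^-1 by [].
rewrite IH //.
have ht : (0 < cont t)%N by case/andP: hs => _ ht; exact: (cont_pos t ht).
rewrite [behead [:: x, y & t]]/= [behead (y :: t)]/=.
have -> : cont [:: x, y & t] = (x * cont (y :: t) + cont t)%N by [].
move: h1 ht; set c := cont (y :: t) => h1 ht.
have h2 : (c%:R : rat) != 0 by rewrite pnatr_eq0 -lt0n.
have h3 : ((cont t)%:R : rat) != 0 by rewrite pnatr_eq0 -lt0n.
rewrite natrD natrM. field. by rewrite h2 h3.
Qed.

Lemma K1 a k : K a 1 k = cont (map a (iota 1 k)).
Proof. by rewrite /K /= !subSS subn0. Qed.
Lemma K3 a k : K a 3 k.+2 = cont (map a (iota 3 k)).
Proof. by rewrite /K /= !subSS subn0. Qed.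

Lemma hP1L a m : cont (map a (iota 1 m.+1)) = (a 1 * cont (map a (iota 2 m)) + K a 3 m.+1)%N.
Proof. case: m => [|k]; last by rewrite K3. by rewrite /K /= muln1 addn0. Qed.

Theorem theorem3p15 (n : nat) (a : nat -> nat) :
  (2 <= n)%N ->
  (forall i, (1 <= i <= n)%N -> (0 < a i)%N) ->
  let p := fun k => (K a 1 k)%:R : rat in
  let r := fun k => (K a 3 k)%:R : rat in
  cf ([seq a k | k <- rev (iota 1 n)] ++ [seq a k | k <- iota 2 n.-1])
  = (p n ^+ 2 - r n ^+ 2) / (p n.-1 * p n - r n.-1 * r n).
Proof.
case: n => [|[|m]] // _ hpos p r.
rewrite /p /r !K1 K3 map_rev.
set A := map a (iota 1 m.+2).
set B := map a (iota 2 m.+1).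
set A' := map a (iota 1 m.+1).
set R := cont (map a (iota 3 m)).
set Q1 := cont (map a (iota 2 m)).
set R1 := K a 3 m.+1.
have hAr : A = rcons A' (a m.+2).
  by rewrite /A /A' -map_rcons -cats1 -[m.+2]addn1 iotaD add1n addn1.
have hposA : all (fun x => 0 < x)%N A.
  apply/allP => x /mapP [i]; rewrite mem_iota => /andP [h1 h2] ->.
  apply: hpos; apply/andP; split => //; lia.
have hposA' : all (fun x => 0 < x)%N A'.
  apply/allP => x /mapP [i]; rewrite mem_iota => /andP [h1 h2] ->.
  apply: hpos; apply/andP; split => //; lia.
have hposB : all (fun x => 0 < x)%N B.
  apply/allP => x /mapP [i]; rewrite mem_iota => /andP [h1 h2] ->.
  apply: hpos; apply/andP; split => //; lia.
have hW : rev A ++ B = a m.+2 :: (rev A' ++ B) by rewrite hAr rev_rcons.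
rewrite cf_cont; last first.
  by rewrite all_cat all_rev hposA hposB.
  by rewrite hW.
have gA1 : (G A).1.1.1 = cont A := proj1 (G_fst A).
have gA3 : (G A).1.2 = cont B := proj2 (G_fst A).
have gA'1 : (G A').1.1.1 = cont A' := proj1 (G_fst A').
have gA'3 : (G A').1.2 = Q1 := proj2 (G_fst A').
have gB1 : (G B).1.1.1 = cont B := proj1 (G_fst B).
have gB3 : (G B).1.2 = R := proj2 (G_fst B).
have c1 : cont (rev A ++ B) = (cont A * cont B + cont B * R)%N.
  rewrite -(proj1 (G_fst (rev A ++ B))) G_cat G_rev.
  move: gA1 gA3 gB1 gB3; case: (G A) => [[[? ?] ?] ?]; case: (G B) => [[[? ?] ?] ?].
  by move=> /= -> -> -> ->.
have c2 : cont (behead (rev A ++ B)) = (cont A' * cont B + Q1 * R)%N.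
  rewrite hW /= -(proj1 (G_fst (rev A' ++ B))) G_cat G_rev.
  move: gA'1 gA'3 gB1 gB3; case: (G A') => [[[? ?] ?] ?]; case: (G B) => [[[? ?] ?] ?].
  by move=> /= -> -> -> ->.
have hP : cont A = (a 1 * cont B + R)%N by [].
have hP1 : cont A' = (a 1 * Q1 + R1)%N.
  exact: hP1L.
have ha1 : (0 < a 1)%N by apply: hpos.
have hQ : (0 < cont B)%N by apply: cont_pos.
have hP1p : (0 < cont A')%N by apply: cont_pos.
rewrite c1 c2 hP.
move: hP1 ha1 hQ hP1p; set PP := cont A'; set QQ := cont B => hP1 ha1 hQ hP1p.
have hD : (0 < PP * QQ + Q1 * R)%N by nia.
have hD2 : (PP%:R * (a 1 * QQ + R)%N%:R - R1%:R * R%:R : rat)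
   = (a 1)%:R * (PP * QQ + Q1 * R)%N%:R.
  rewrite hP1 !natrD !natrM; ring.
rewrite hD2.
have e1 : ((a 1)%:R : rat) != 0 by rewrite pnatr_eq0 -lt0n.
have e2 : ((PP * QQ + Q1 * R)%N%:R : rat) != 0 by rewrite pnatr_eq0 -lt0n.
move: e2; rewrite !natrD !natrM => e2.
field. by rewrite e1 e2.
Qed.
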